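(* Let $N\geq 2$ be an integer, let $I_0>0$, and let $0<\mu_{min}\leq\mu_{max}$ be given. For $K>0$, $\mu_1\in\mathbb{R}$ and $\varepsilon\geq 0$ define $$G_N(K,\mu_1,\varepsilon)=\frac{I_0}{K}\Big[(1+K\mu_1)^N+\big(1-K\mu_1(1+\varepsilon)\big)^N-2\Big].$$ Then for every $K>0$ there exists $\delta>0$ such that whenever $0\leq\varepsilon_{max}<\delta$, one has $G_N(K,\mu_1,\varepsilon)>0$ for all $\mu_1$ with $\mu_{min}\leq|\mu_1|\leq\mu_{max}$ and all $\varepsilon$ with $0\leq\varepsilon\leq\varepsilon_{max}$.
   Context: Interpretation: $G_N(K,\mu_1,\varepsilon)$ is the expected cumulative trading gain $\mathbb{E}[g(N)]$ after $N$ periods of a two-stock long-short linear feedback controller with initial investment $I_0$ and feedback parameter $K$, where the first stock has mean return $\mu_1$ and the second has mean return $(1+\varepsilon)\beta_0\mu_1$ with $\beta_0\neq 0$ known and $\varepsilon\in[0,\varepsilon_{max}]$ unknown. The corollary says that for any feedback parameter, positivity of the expected gain is robust once the correlation uncertainty bound $\varepsilon_{max}$ is small enough. *)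

(* Defs.v *)
From Stdlib Require Import Reals.
Open Scope R_scope.

(* Expected cumulative gain G_N(K, mu1, eps) of the two-stock long-short
   linear feedback controller with initial investment I0. *)
Definition G_N (N : nat) (I0 K mu1 eps : R) : R :=
  I0 / K * ((1 + K * mu1) ^ N + (1 - K * mu1 * (1 + eps)) ^ N - 2).

(* Main.v *)
Require Import Defs.
From Stdlib Require Import Reals Lra Lia Psatz.
Open Scope R_scope.

Lemma sd_bound (x : R) (n : nat) :
  (1 + x) ^ n + (1 - x) ^ n >= 2 + INR n * (INR n - 1) * x ^ 2 /\
  x * ((1 + x) ^ n - (1 - x) ^ n) >= 2 * INR n * x ^ 2.
Proof.
  induction n as [|n [H1 H2]].
  - simpl. split; nra.
  - rewrite S_INR. simpl.
    assert (Hs : (1 + x) ^ n + (1 - x) ^ n >= 2).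
    { assert (0 <= INR n * (INR n - 1) * x ^ 2 \/ n = 0%nat) as [h|h].
      { destruct n. right; reflexivity. left. rewrite S_INR.
        assert (0 <= INR n) by apply pos_INR. nra. }
      lra. subst n. simpl. lra. }
    split; nra.
Qed.

Lemma pow_diff (a b C : R) (n : nat) :
  Rabs a <= C -> Rabs b <= C ->
  Rabs (a ^ (S n) - b ^ (S n)) <= INR (S n) * C ^ n * Rabs (a - b).
Proof.
  intros Ha Hb.
  assert (HC : 0 <= C) by (pose proof (Rabs_pos a); lra).
  induction n as [|n IH].
  - simpl. rewrite !Rmult_1_r, Rmult_1_l. lra.
  - replace (a ^ S (S n) - b ^ S (S n)) with
      (a * (a ^ S n - b ^ S n) + b ^ S n * (a - b)) by (simpl; ring).
    assert (Hbn : Rabs (b ^ S n) <= C ^ S n).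
    { rewrite <- RPow_abs. apply pow_incr. split; [apply Rabs_pos|exact Hb]. }
    eapply Rle_trans. apply Rabs_triang.
    rewrite !Rabs_mult.
    assert (h1 : Rabs a * Rabs (a ^ S n - b ^ S n) <= C * (INR (S n) * C ^ n * Rabs (a - b))).
    { apply Rmult_le_compat; try apply Rabs_pos; assumption. }
    assert (h2 : Rabs (b ^ S n) * Rabs (a - b) <= C ^ S n * Rabs (a - b)).
    { apply Rmult_le_compat_r; [apply Rabs_pos|exact Hbn]. }
    rewrite (S_INR (S n)). simpl in *. nra.
Qed.

Theorem mainTheorem2 :
  forall (N : nat) (I0 mu_min mu_max : R),
    (2 <= N)%nat -> 0 < I0 -> 0 < mu_min -> mu_min <= mu_max ->
    forall K : R, 0 < K ->
      exists delta : R, 0 < delta /\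
        forall eps_max : R, 0 <= eps_max -> eps_max < delta ->
          forall mu1 eps : R,
            mu_min <= Rabs mu1 <= mu_max ->
            0 <= eps <= eps_max ->
            G_N N I0 K mu1 eps > 0.
Proof.
  intros N I0 mn mx HN HI Hmn Hmm K HK.
  destruct N as [|m]; [lia|].
  set (A := K * mn). set (B := K * mx). set (C := 1 + 2 * B).
  assert (HA : 0 < A) by (unfold A; nra).
  assert (HB : A <= B) by (unfold A, B; nra).
  assert (HCp : 0 < C ^ m) by (apply pow_lt; unfold C; lra).
  assert (HNp : 0 < INR (S m)) by (apply lt_0_INR; lia).
  set (L := INR (S m) * C ^ m).
  assert (HL : 0 < L) by (unfold L; nra).
  exists (Rmin 1 (A / L)). split.
  { apply Rmin_pos. lra. apply Rdiv_lt_0_compat; lra. }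
  intros em Hem Hemd mu1 eps Hmu Heps.
  assert (He1 : eps < 1) by (pose proof (Rmin_l 1 (A / L)); lra).
  assert (HeL : L * eps < A).
  { pose proof (Rmin_r 1 (A / L)).
    assert (eps < A / L) by lra.
    apply (Rmult_lt_compat_l L) in H0; [|lra].
    replace (L * (A / L)) with A in H0 by (field; lra). lra. }
  set (x := K * mu1).
  assert (Hx : A <= Rabs x <= B).
  { unfold x, A, B. rewrite Rabs_mult, (Rabs_right K) by lra. split; nra. }
  destruct (sd_bound x (S m)) as [Hs _].
  assert (Hnn : INR (S m) * (INR (S m) - 1) >= 2).
  { rewrite !S_INR. assert (1 <= INR m).
    { replace 1 with (INR 1) by reflexivity. apply le_INR. lia. }
    nra. }
  assert (Hd : Rabs ((1 - x * (1 + eps)) ^ S m - (1 - x) ^ S m)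
               <= L * Rabs (x * eps)).
  { unfold L.
    replace (x * eps) with ((1 - x) - (1 - x * (1 + eps))) at 1 by ring.
    rewrite Rabs_minus_sym.
    apply pow_diff.
    - pose proof (Rle_abs x). pose proof (Rle_abs (-x)). rewrite Rabs_Ropp in *.
      apply Rabs_le. unfold C. split; nra.
    - pose proof (Rle_abs x). pose proof (Rle_abs (-x)). rewrite Rabs_Ropp in *.
      apply Rabs_le. unfold C. split; nra. }
  rewrite Rabs_mult, (Rabs_right eps) in Hd by lra.
  assert (Hx2 : x ^ 2 = Rabs x * Rabs x) by (rewrite <- Rabs_mult; simpl; rewrite Rmult_1_r; rewrite Rabs_right; [ring| nra]).
  unfold G_N. fold x.
  apply Rmult_gt_0_compat.
  { apply Rdiv_lt_0_compat; lra. }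
  set (d := (1 - x * (1 + eps)) ^ S m - (1 - x) ^ S m) in Hd.
  pose proof (Rle_abs (- d)) as Hd'. rewrite Rabs_Ropp in Hd'.
  replace ((1 + x) ^ S m + (1 - x * (1 + eps)) ^ S m - 2)
    with (((1 + x) ^ S m + (1 - x) ^ S m - 2) + d) by (unfold d; ring).
  assert (0 <= INR (S m) * (INR (S m) - 1) * x ^ 2 - 2 * x ^ 2).
  { assert (0 <= x ^ 2) by nra. nra. }
  assert (Rabs x * A <= Rabs x * Rabs x) by (apply Rmult_le_compat_l; [apply Rabs_pos|lra]).
  assert (L * (Rabs x * eps) <= Rabs x * A - Rabs x * (A - L*eps)) by lra.
  assert (0 < Rabs x * (A - L * eps)) by (apply Rmult_lt_0_compat; lra).
  nra.
Qed.
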